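(* In the setting described in the context, the map $\xi:X_{\mathfrak L_1}\times\mathbb Z_+\to X_{\mathfrak L_2}\times\mathbb Z_+$, $\xi(x,n)=(\psi_0(x),\,g_{(\pi_1(x)_{[1,L]},\,v^L_L(x))}(n))$, is a homeomorphism (where $\mathbb Z_+$ carries the discrete topology).
   Context: $\mathbb Z_+=\{0,1,2,\dots\}$, $\mathbb N=\{1,2,\dots\}$. A $\lambda$-graph system $\mathfrak L=(V,E,\lambda,\iota)$ over a finite alphabet $\Sigma$ consists of finite nonempty pairwise disjoint vertex sets $V_l$ ($l\in\mathbb Z_+$); finite pairwise disjoint edge sets $E_{l,l+1}$, each $e\in E_{l,l+1}$ having a source $s(e)\in V_l$ and a terminal $t(e)\in V_{l+1}$; a labeling map $\lambda:E\to\Sigma$; and surjections $\iota:V_{l+1}\to V_l$; such that every vertex is the source of some edge, every vertex in $V_l$ ($l\ge1$) is the terminal of some edge, and (local property) for all $l\ge1$, $u\in V_{l-1}$, $v\in V_{l+1}$ there is a label-preserving bijection between $\{e\in E_{l,l+1}: \iota(s(e))=u,\ t(e)=v\}$ and $\{e\in E_{l-1,l}: s(e)=u,\ t(e)=\iota(v)\}$. Left-resolving: $t(e)=t(f)$, $\lambda(e)=\lambda(f)$ imply $e=f$. $\Omega_{\mathfrak L}=\{(u^l)_{l}\in\prod_l V_l: \iota(u^{l+1})=u^l\}$ (projective limit topology). $E_{\mathfrak L}$ = set of $(u,\alpha,w)\in\Omega_{\mathfrak L}\times\Sigma\times\Omega_{\mathfrak L}$ such that for each $l$ some $e\in E_{l,l+1}$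 has $s(e)=u^l$, $t(e)=w^{l+1}$, $\lambda(e)=\alpha$. $X_{\mathfrak L}$ = set of $x=(\alpha_i,u_i)_{i\in\mathbb N}$ in $\Sigma\times\Omega_{\mathfrak L}$ with $(u_i,\alpha_{i+1},u_{i+1})\in E_{\mathfrak L}$ for all $i$ and $(u_0,\alpha_1,u_1)\in E_{\mathfrak L}$ for some $u_0$; relative product topology; $\sigma_{\mathfrak L}$ the left shift. For such $x$: $x_{[k,\infty)}=(\alpha_i,u_i)_{i\ge k}$; $\pi_{\mathfrak L}(x)=(\alpha_i)_{i\in\mathbb N}$, $\pi_{\mathfrak L}(x)_{[1,k]}=(\alpha_1,\dots,\alpha_k)$; $v^l_n(x)$ denotes the $l$-th coordinate $u_n^l$ of $u_n$. $X_\Lambda=\pi_{\mathfrak L}(X_{\mathfrak L})$, $B_k(X_\Lambda)$ its words of length $k$. Setting: $\mathfrak L_1,\mathfrak L_2$ are left-resolving $\lambda$-graph systems; write $\pi_i=\pi_{\mathfrak L_i}$, $\Lambda_i$ for the presented subshifts. $\psi_0:X_{\mathfrak L_1}\to X_{\mathfrak L_2}$ is a continuous surjective local homeomorphism with $\sigma_{\mathfrak L_2}\circ\psi_0=\psi_0\circ\sigma_{\mathfrak L_1}$, and $1\le l\le L$ are integers such that (a) $\psi_0(x)=\psi_0(x')$ implies $x_{[l,\infty)}=x'_{[l,\infty)}$; (b) there is a map $\Psi:B_L(X_{\Lambda_1})\to B_l(X_{\Lambda_2})$ with $\pi_2(\psi_0(x))_{[1,l]}=\Psi(\pi_1(x)_{[1,L]})$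 for all $x\in X_{\mathfrak L_1}$. For $v\in V_L$ (vertices of $\mathfrak L_1$), $B_L(\Lambda_1,v)$ is the set of $\mu\in B_L(X_{\Lambda_1})$ with $\mu=\pi_1(x)_{[1,L]}$ for some $x\in X_{\mathfrak L_1}$ with $v^L_L(x)=v$. For $\mu,\mu'\in B_L(\Lambda_1,v)$, $\mu\sim_v\mu'$ means: there exist $x,x'\in X_{\mathfrak L_1}$ with $\pi_1(x)_{[1,L]}=\mu$, $\pi_1(x')_{[1,L]}=\mu'$, $v^L_L(x)=v^L_L(x')=v$ and $\psi_0(x)=\psi_0(x')$; this is an equivalence relation on the finite set $B_L(\Lambda_1,v)$. For every $v\in V_L$ and every $\sim_v$-class $C\subset B_L(\Lambda_1,v)$, fix a partition $\mathbb Z_+=\bigsqcup_{\nu\in C}\mathbb Z_+(\nu,v)$ into infinite subsets and bijections $g_{(\nu,v)}:\mathbb Z_+\to\mathbb Z_+(\nu,v)$, $\nu\in C$. *)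

(* Defs.v *)
From mathcomp Require Import all_boot.
Set Implicit Arguments. Unset Strict Implicit. Unset Printing Implicit Defensive.

(* A topology on a type T is given by its family of open sets           *)
(* opn : (T -> Prop) -> Prop; subsets are predicates A : T -> Prop and  *)
(* carry the subspace topology.                                         *)

Definition sub_open (T : Type) (opn : (T -> Prop) -> Prop) (A W : T -> Prop) : Prop :=
  (forall t, W t -> A t) /\
  exists O, opn O /\ forall t, A t -> (W t <-> O t).

Definition continuous_on (S T : Type) (opnS : (S -> Prop) -> Prop) (A : S -> Prop)
    (opnT : (T -> Prop) -> Prop) (B : T -> Prop) (f : S -> T) : Prop :=
  (forall s, A s -> B (f s)) /\
  forall W, sub_open opnT B W -> sub_open opnS A (fun s => A s /\ W (f s)).

Definition homeo_on (S T : Type) (opnS : (S -> Prop) -> Prop) (A : S -> Prop)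
    (opnT : (T -> Prop) -> Prop) (B : T -> Prop) (f : S -> T) : Prop :=
  exists g : T -> S,
    (forall s, A s -> g (f s) = s) /\ (forall t, B t -> f (g t) = t) /\
    continuous_on opnS A opnT B f /\ continuous_on opnT B opnS A g.

Definition image_of (S T : Type) (f : S -> T) (U : S -> Prop) : T -> Prop :=
  fun t => exists s, U s /\ f s = t.

Definition surjective_on (S T : Type) (A : S -> Prop) (B : T -> Prop) (f : S -> T) : Prop :=
  forall t, B t -> exists s, A s /\ f s = t.

Definition local_homeo_on (S T : Type) (opnS : (S -> Prop) -> Prop) (A : S -> Prop)
    (opnT : (T -> Prop) -> Prop) (B : T -> Prop) (f : S -> T) : Prop :=
  (forall s, A s -> B (f s)) /\
  forall s, A s -> exists U : S -> Prop,
    sub_open opnS A U /\ U s /\ sub_open opnT B (image_of f U) /\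
    homeo_on opnS U opnT (image_of f U) f.

(* V l = V_l, E l = E_{l,l+1}, iota l : V_{l+1} -> V_l.                 *)

Record lgs (Sigma : finType) := Lgs {
  V : nat -> finType;
  E : nat -> finType;
  src : forall l, E l -> V l;
  tgt : forall l, E l -> V l.+1;
  lab : forall l, E l -> Sigma;
  iot : forall l, V l.+1 -> V l;
  V_nonempty : forall l, 0 < #|V l|;
  iot_surj : forall l (v : V l), exists w : V l.+1, iot w = v;
  src_all : forall l (v : V l), exists e : E l, src e = v;
  tgt_all : forall l (v : V l.+1), exists e : E l, tgt e = v;
  (* local property, stated for l = k+1 >= 1 *)
  local_prop : forall k (u : V k) (v : V k.+2),
    exists f : {e : E k.+1 | iot (src e) = u /\ tgt e = v} ->
               {e : E k | src e = u /\ tgt e = iot v},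
      bijective f /\ forall e, lab (proj1_sig (f e)) = lab (proj1_sig e)
}.

Definition left_resolving (Sigma : finType) (L : lgs Sigma) : Prop :=
  forall l (e f : E L l), tgt e = tgt f -> lab e = lab f -> e = f.

(* ambient product  prod_l V_l  and the projective limit Omega_L in it *)
Definition OmegaT (Sigma : finType) (L : lgs Sigma) : Type := forall l, V L l.

Definition in_Omega (Sigma : finType) (L : lgs Sigma) (u : OmegaT L) : Prop :=
  forall l, iot (u l.+1) = u l.

Definition edgeL (Sigma : finType) (L : lgs Sigma) (u : OmegaT L) (a : Sigma) (w : OmegaT L) : Prop :=
  in_Omega u /\ in_Omega w /\
  forall l, exists e : E L l, src e = u l /\ tgt e = w l.+1 /\ lab e = a.

(* Ambient space (Sigma x prod_l V_l)^N.  Index shift: x i is the pair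
   (alpha_{i+1}, u_{i+1}) of the paper (paper indices start at 1). *)
Definition XT (Sigma : finType) (L : lgs Sigma) : Type := nat -> Sigma * OmegaT L.

Definition inX (Sigma : finType) (L : lgs Sigma) (x : XT L) : Prop :=
  (forall i, edgeL (x i).2 (x i.+1).1 (x i.+1).2) /\
  exists u0, edgeL u0 (x 0).1 (x 0).2.

Definition shiftX (Sigma : finType) (L : lgs Sigma) (x : XT L) : XT L :=
  fun i => x i.+1.

Definition agree (Sigma : finType) (L : lgs Sigma) (N : nat) (x y : XT L) : Prop :=
  forall i, i < N -> (x i).1 = (y i).1 /\ forall l, l < N -> (x i).2 l = (y i).2 l.

(* product topology on the ambient space (Sigma discrete, each V_l discrete);
   the cylinders given by [agree N x] form a basis *)
Definition openX (Sigma : finType) (L : lgs Sigma) (O : XT L -> Prop) : Prop :=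
  forall x, O x -> exists N, forall y, agree N x y -> O y.

(* product topology on (ambient) x Z_+, Z_+ discrete *)
Definition openXN (Sigma : finType) (L : lgs Sigma) (O : XT L * nat -> Prop) : Prop :=
  forall p, O p -> exists N, forall q, agree N p.1 q.1 -> p.2 = q.2 -> O q.

Definition inXN (Sigma : finType) (L : lgs Sigma) (p : XT L * nat) : Prop := inX p.1.

Definition word (Sigma : finType) (L : lgs Sigma) (k : nat) (x : XT L) : seq Sigma :=
  [seq (x i).1 | i <- iota 0 k].

(* v^l_n(x) = u_n^l, for n >= 1 *)
Definition vert (Sigma : finType) (L : lgs Sigma) (l n : nat) (x : XT L) : V L l :=
  (x n.-1).2 l.

Definition inB (Sigma : finType) (L : lgs Sigma) (LL : nat) (v : V L LL) (mu : seq Sigma) : Prop :=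
  exists x, inX x /\ word LL x = mu /\ vert LL LL x = v.

Definition simv (Sigma1 Sigma2 : finType) (L1 : lgs Sigma1) (L2 : lgs Sigma2)
    (psi0 : XT L1 -> XT L2) (LL : nat) (v : V L1 LL) (mu mu' : seq Sigma1) : Prop :=
  exists x x', inX x /\ inX x' /\ word LL x = mu /\ word LL x' = mu' /\
    vert LL LL x = v /\ vert LL LL x' = v /\ psi0 x = psi0 x'.

(* Main.v *)
Require Import Defs.
From mathcomp Require Import all_boot zify.
From Stdlib Require Import FunctionalExtensionality ClassicalEpsilon Classical.
Set Implicit Arguments. Unset Strict Implicit. Unset Printing Implicit Defensive.

Definition opn_of (S : Type) (R : nat -> S -> S -> Prop) (O : S -> Prop) :=
  forall x, O x -> exists N, forall y, R N x y -> O y.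

Definition equivR (S : Type) (R : nat -> S -> S -> Prop) :=
  (forall N x, R N x x) /\ (forall N x y, R N x y -> R N y x) /\
  (forall N x y z, R N x y -> R N y z -> R N x z).

Lemma cont_fwd (S T : Type) (opnS : (S -> Prop) -> Prop) (RS : nat -> S -> S -> Prop)
  (opnT : (T -> Prop) -> Prop) (RT : nat -> T -> T -> Prop) A B (f : S -> T) :
  (forall O, opnS O <-> opn_of RS O) -> (forall O, opnT O <-> opn_of RT O) -> equivR RT ->
  continuous_on opnS A opnT B f ->
  forall s, A s -> forall N, exists M, forall s', A s' -> RS M s s' -> RT N (f s) (f s').
Proof.
move=> HS HT [Rr [Rs Rt]] [Hm Hc] s As N.
have sub : sub_open opnT B (fun t => B t /\ RT N (f s) t).
  split; first by move=> t [].
  exists (fun t => RT N (f s) t); split.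
    by apply/HT => t Ht; exists N => t' Ht'; exact: Rt Ht Ht'.
  by move=> t Bt; split; [case|].
case: (Hc _ sub) => _ [O1 [/HS HO1 HAO]].
have O1s : O1 s by apply/HAO => //; split=> //; split; [exact: Hm|exact: Rr].
case: (HO1 _ O1s) => M HM; exists M => s' As' Hss'.
by case: ((HAO s' As').2 (HM _ Hss')) => _ [].
Qed.

Lemma cont_bwd (S T : Type) (opnS : (S -> Prop) -> Prop) (RS : nat -> S -> S -> Prop)
  (opnT : (T -> Prop) -> Prop) (RT : nat -> T -> T -> Prop) A B (f : S -> T) :
  (forall O, opnS O <-> opn_of RS O) -> (forall O, opnT O <-> opn_of RT O) -> equivR RS ->
  (forall s, A s -> B (f s)) ->
  (forall s, A s -> forall N, exists M, forall s', A s' -> RS M s s' -> RT N (f s) (f s')) ->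
  continuous_on opnS A opnT B f.
Proof.
move=> HS HT [Rr [Rs Rt]] Hm Hl; split=> // W [WB [O [/HT HO HWO]]].
split; first by move=> s [].
exists (fun s => exists M, forall s', RS M s s' -> A s' -> W (f s')); split.
  apply/HS => s [M HM]; exists M => s1 H1; exists M => s' H' As'.
  by apply: HM => //; exact: Rt H1 H'.
move=> s As; split.
  move=> [_ Wfs]; have Ofs : O (f s) by apply/HWO => //; exact: Hm.
  case: (HO _ Ofs) => N HN; case: (Hl s As N) => M HM; exists M => s' H' As'.
  by apply/HWO; [exact: Hm | apply: HN; exact: HM].
by move=> [M HM]; split=> //; apply: HM => //; exact: Rr.
Qed.

Lemma agree_equiv (Sigma : finType) (L : lgs Sigma) : equivR (@agree _ L).
Proof.
split; [|split].
- by move=> N x i _; split.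
- by move=> N x y H i Hi; case: (H i Hi) => h1 h2; split=> // k Hk; rewrite h2.
- move=> N x y z H1 H2 i Hi; case: (H1 i Hi) => a1 b1; case: (H2 i Hi) => a2 b2.
  by split; [rewrite a1 | move=> k Hk; rewrite b1 ?b2].
Qed.

Lemma agree_mono (Sigma : finType) (L : lgs Sigma) M N (x y : XT L) :
  N <= M -> agree M x y -> agree N x y.
Proof.
move=> NM H i Hi; case: (H i (leq_trans Hi NM)) => a b; split=> // k Hk.
exact: b (leq_trans Hk NM).
Qed.

Definition RXN (Sigma : finType) (L : lgs Sigma) (N : nat) (p q : XT L * nat) :=
  agree N p.1 q.1 /\ p.2 = q.2.

Lemma RXN_equiv (Sigma : finType) (L : lgs Sigma) : equivR (@RXN _ L).
Proof.
case: (agree_equiv L) => r [s t]; split; [|split].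
- by move=> N x; split.
- by move=> N x y [h1 h2]; split; [apply: s|].
- by move=> N x y z [h1 h2] [h3 h4]; split; [apply: t h1 h3| rewrite h2].
Qed.

Lemma openXN_iff (Sigma : finType) (L : lgs Sigma) O : openXN O <-> opn_of (@RXN _ L) O.
Proof.
split=> H p Hp; case: (H p Hp) => N HN; exists N.
  by move=> q [h1 h2]; apply: HN.
by move=> q h1 h2; apply: HN.
Qed.

Lemma openX_iff (Sigma : finType) (L : lgs Sigma) O : openX O <-> opn_of (@agree _ L) O.
Proof. by []. Qed.

Lemma edge_uniq_lvl (Sigma : finType) (L : lgs Sigma) (HL : left_resolving L)
  (u u' w w' : OmegaT L) a k :
  edgeL u a w -> edgeL u' a w' -> w k.+1 = w' k.+1 -> u k = u' k.
Proof.
move=> [_ [_ H]] [_ [_ H']] Hw.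
case: (H k) => e [<- [te le]]; case: (H' k) => e' [<- [te' le']].
by rewrite (HL k e e') // ?te ?te' ?le ?le'.
Qed.

Lemma edge_uniq (Sigma : finType) (L : lgs Sigma) (HL : left_resolving L)
  (u u' w : OmegaT L) a : edgeL u a w -> edgeL u' a w -> u = u'.
Proof.
move=> H H'; apply: functional_extensionality_dep => k; exact: edge_uniq_lvl H H' _.
Qed.

Lemma lift_edge (Sigma : finType) (L : lgs Sigma) (w : OmegaT L) a : in_Omega w ->
  (exists e : E L 0, tgt e = w 1 /\ lab e = a) ->
  forall k, exists e : E L k, tgt e = w k.+1 /\ lab e = a.
Proof.
move=> Hw H0; elim=> [|k [e [te le]]] //.
case: (@local_prop _ L k (src e) (w k.+2)) => f [[f' ff' f'f] Hf].
have P : src e = src e /\ tgt e = iot (w k.+2) by split=> //; rewrite Hw.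
pose s := exist (fun e0 : E L k => src e0 = src e /\ tgt e0 = iot (w k.+2)) e P.
exists (proj1_sig (f' s)); split.
  exact: (proj2 (proj2_sig (f' s))).

by rewrite -Hf f'f.
Qed.

Definition back (Sigma : finType) (L : lgs Sigma) (w : OmegaT L) (a : Sigma) : OmegaT L :=
  fun k => match [pick e : E L k | (tgt e == w k.+1) && (lab e == a)] with
           | Some e => src e | None => w k end.

Lemma backE (Sigma : finType) (L : lgs Sigma) (w : OmegaT L) a : in_Omega w ->
  (exists e : E L 0, tgt e = w 1 /\ lab e = a) ->
  forall k, exists e : E L k, tgt e = w k.+1 /\ lab e = a /\ back w a k = src e.
Proof.
move=> Hw H0 k; rewrite /back; case: pickP => [e /andP[/eqP ? /eqP ?]|H]; first by exists e.
case: (lift_edge Hw H0 k) => e [te le].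
by have := H e; rewrite te le !eqxx.
Qed.

Lemma back_spec (Sigma : finType) (L : lgs Sigma) (HL : left_resolving L)
  (w : OmegaT L) a : in_Omega w ->
  (exists e : E L 0, tgt e = w 1 /\ lab e = a) -> edgeL (back w a) a w.
Proof.
move=> Hw H0; split; [|split=> //].
  move=> k.
  case: (backE Hw H0 k.+1) => e1 [te1 [le1 b1]].
  case: (backE Hw H0 k) => e0 [te0 [le0 b0]].
  case: (@local_prop _ L k (iot (src e1)) (w k.+2)) => f [_ Hf].
  pose s := exist (fun e : E L k.+1 => iot (src e) = iot (src e1) /\ tgt e = w k.+2) e1 (conj erefl te1).
  case E1 : (f s) => [e2 [se2 te2]].
  have le2 : lab e2 = a by have := Hf s; rewrite E1 /= le1.
  have : e2 = e0 by apply: HL; rewrite ?te2 ?te0 ?Hw ?le2 ?le0.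
  by move=> ee; rewrite b1 b0 -ee se2.
move=> k; case: (backE Hw H0 k) => e [te [le b]]; by exists e.
Qed.

Lemma omega_down (Sigma : finType) (L : lgs Sigma) (u u' : OmegaT L) K :
  in_Omega u -> in_Omega u' -> u K = u' K -> forall k, k <= K -> u k = u' k.
Proof.
move=> Hu Hu'; elim: K => [|K IH] HK k hk.
  by move: hk; rewrite leqn0 => /eqP ->.
have HK' : u K = u' K by rewrite -Hu -Hu' HK.
move: hk; rewrite leq_eqVlt => /orP [/eqP -> //|hk]; exact: IH.
Qed.

Lemma det_back (Sigma : finType) (L : lgs Sigma) (HL : left_resolving L) (X Y : XT L) p :
  inX X -> inX Y -> X p = Y p -> (forall i, i < p -> (X i).1 = (Y i).1) ->
  forall i, i <= p -> X i = Y i.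
Proof.
move=> [HX _] [HY _] Hp Hlab.
suff H : forall d, d <= p -> X (p - d) = Y (p - d).
  by move=> i hi; have := H (p - i) (leq_subr _ _); rewrite subKn.
elim=> [|d IH] hd; first by rewrite subn0.
have e1 : (p - d.+1).+1 = p - d by lia.
have IH' := IH (ltnW hd); rewrite -e1 in IH'.
apply: injective_projections; first by apply: Hlab; lia.
have := HX (p - d.+1); have := HY (p - d.+1); rewrite IH' => h1 h2.
exact: edge_uniq h2 h1.
Qed.

Lemma word_eq (Sigma : finType) (L : lgs Sigma) k (x y : XT L) :
  (forall i, i < k -> (x i).1 = (y i).1) -> word k x = word k y.
Proof.
move=> H; apply/eq_in_map => i; rewrite mem_iota add0n => /andP[_]; exact: H.
Qed.

Lemma word_nth (Sigma : finType) (L : lgs Sigma) k (x y : XT L) :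
  word k x = word k y -> forall i, i < k -> (x i).1 = (y i).1.
Proof.
move=> H i hi; have := congr1 (fun s => nth (x i).1 s i) H.
by rewrite /word !(nth_map 0) ?size_iota // nth_iota.
Qed.

Lemma inX_shift (Sigma : finType) (L : lgs Sigma) (x : XT L) : inX x -> inX (shiftX x).
Proof. by move=> [H1 H2]; split; [move=> i; exact: (H1 i.+1) | exists (x 0).2; exact: (H1 0)]. Qed.

Lemma inX_omega (Sigma : finType) (L : lgs Sigma) (x : XT L) : inX x -> forall i, in_Omega (x i).2.
Proof.
move=> [H1 [u0 H0]] [|i]; first by case: H0 => _ [].
by case: (H1 i) => _ [].
Qed.

Lemma inX_lvl0 (Sigma : finType) (L : lgs Sigma) (x : XT L) : inX x ->
  forall i, exists e : E L 0, tgt e = (x i).2 1 /\ lab e = (x i).1.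
Proof.
move=> [H1 [u0 H0]] [|i].
  by case: H0 => _ [_ H]; case: (H 0) => e [_ [? ?]]; exists e.
by case: (H1 i) => _ [_ H]; case: (H 0) => e [_ [? ?]]; exists e.
Qed.

Lemma wv_agree (Sigma : finType) (L : lgs Sigma) M LL (x x' : XT L) :
  agree M x x' -> LL < M -> word LL x = word LL x' /\ vert LL LL x = vert LL LL x'.
Proof.
move=> H hM; split.
  by apply: word_eq => i hi; case: (H i (ltn_trans hi hM)).
rewrite /vert; case: (H LL.-1 _) => [|_ ->] //; lia.
Qed.

Lemma omega_inh (Sigma : finType) (L : lgs Sigma) k : exists v : V L k, True.
Proof. by case/card_gt0P: (V_nonempty L k) => v _; exists v. Qed.

Theorem lemma7p6 (Sigma1 Sigma2 : finType) (L1 : lgs Sigma1) (L2 : lgs Sigma2)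
  (HL1 : left_resolving L1) (HL2 : left_resolving L2)
  (psi0 : XT L1 -> XT L2)
  (Hcont : continuous_on (@openX _ L1) (@inX _ L1) (@openX _ L2) (@inX _ L2) psi0)
  (Hsurj : surjective_on (@inX _ L1) (@inX _ L2) psi0)
  (Hloc : local_homeo_on (@openX _ L1) (@inX _ L1) (@openX _ L2) (@inX _ L2) psi0)
  (Hshift : forall x, inX x -> psi0 (shiftX x) = shiftX (psi0 x))
  (l LL : nat) (Hl : 1 <= l) (HlL : l <= LL)
  (Ha : forall x x', inX x -> inX x' -> psi0 x = psi0 x' ->
          forall i, l.-1 <= i -> x i = x' i)
  (Psi : seq Sigma1 -> seq Sigma2)
  (Hb : forall x, inX x -> word l (psi0 x) = Psi (word LL x))
  (g : seq Sigma1 -> V L1 LL -> nat -> nat)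
  (Hg_inj : forall v mu, inB v mu -> injective (g mu v))
  (Hg_cover : forall v mu, inB v mu -> forall n,
      exists nu, simv psi0 v mu nu /\ exists m, g nu v m = n)
  (Hg_disj : forall v nu nu', simv psi0 v nu nu' ->
      forall m m', g nu v m = g nu' v m' -> nu = nu') :
  homeo_on (@openXN _ L1) (@inXN _ L1) (@openXN _ L2) (@inXN _ L2)
    (fun p : XT L1 * nat =>
       (psi0 p.1, g (word LL p.1) (vert LL LL p.1) p.2)).
Proof.
have psiX : forall x, inX x -> inX (psi0 x) := Hcont.1.
have vertE : forall x x', inX x -> inX x' -> psi0 x = psi0 x' ->
    vert LL LL x = vert LL LL x'.
  by move=> x x' hx hx' e; rewrite /vert (Ha x x' hx hx' e) //; lia.
have inj : forall x x' n n', inX x -> inX x' -> psi0 x = psi0 x' ->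
    g (word LL x) (vert LL LL x) n = g (word LL x') (vert LL LL x') n' -> x = x' /\ n = n'.
  move=> x x' n n' hx hx' e eg.
  have ev := vertE x x' hx hx' e; rewrite -ev in eg.
  have ew : word LL x = word LL x'.
    apply: (Hg_disj (vert LL LL x)) eg.
    by exists x, x'; do 6 split => //.
  rewrite -ew in eg.
  have hB : inB (vert LL LL x) (word LL x) by exists x.
  have nn := Hg_inj _ _ hB _ _ eg.
  split => //; apply: functional_extensionality => i.
  case: (leqP l.-1 i) => hi; first exact: Ha.
  apply: (det_back HL1 hx hx' (p:=l.-1)) => //; last exact: ltnW.
    exact: Ha.
  move=> j hj; apply: (word_nth ew); lia.
have surj : forall y m, inX y -> exists x n, inX x /\ psi0 x = y /\
    g (word LL x) (vert LL LL x) n = m.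
  move=> y m hy.
  case: (Hsurj y hy) => x [hx ex].
  have hB : inB (vert LL LL x) (word LL x) by exists x.
  case: (Hg_cover _ _ hB m) => nu [[x1 [x1' [h1 [h1' [w1 [w1' [v1 [v1' e1]]]]]]]]] [m0 gm].
  set p := l.-1.
  have A1 : forall i, p <= i -> x1 i = x1' i by exact: Ha.
  have lab_eq : forall i, i < LL -> (x i).1 = (x1 i).1.
    by move=> i hi; apply: (word_nth (esym w1)).
  have agr : forall k, k <= l -> (x p).2 k = (x1 p).2 k.
    suff H : forall d, d <= LL.-1 - p -> forall k, k <= LL - d ->
        (x (LL.-1 - d)).2 k = (x1 (LL.-1 - d)).2 k.
      move=> k hk; have := H (LL.-1 - p) (leqnn _) k.
      have -> : LL.-1 - (LL.-1 - p) = p by lia.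
      apply; lia.
    elim=> [|d IH] hd k hk.
      rewrite subn0; apply: (omega_down (K:=LL)); [exact: inX_omega|exact: inX_omega| |by rewrite subn0 in hk].
      by move: v1; rewrite /vert => ->.
    have e2 : (LL.-1 - d.+1).+1 = LL.-1 - d by lia.
    have E1 := hx.1 (LL.-1 - d.+1); have E2 := h1.1 (LL.-1 - d.+1).
    rewrite e2 in E1 E2; rewrite (lab_eq (LL.-1 - d)) in E1; last by lia.
    apply: (edge_uniq_lvl HL1 E1 E2); apply: IH; lia.
  pose bk := fix bk (j : nat) : OmegaT L1 :=
    match j with 0 => (x p).2 | j'.+1 => back (bk j') (x1' (p - j')).1 end.
  have bkS : forall j, bk j.+1 = back (bk j) (x1' (p - j)).1 by [].
  have B : forall j, j <= p -> in_Omega (bk j) /\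
      (forall k, k <= l - j -> bk j k = (x1' (p - j)).2 k).
    elim=> [|j IH] hj.
      split; first exact: inX_omega.
      by move=> k hk; rewrite /= subn0 -(A1 p) // agr //; rewrite subn0 in hk.
    case: (IH (ltnW hj)) => om ag.
    have ex0 : exists e : E L1 0, tgt e = bk j 1 /\ lab e = (x1' (p - j)).1.
      by rewrite ag; [exact: inX_lvl0|lia].
    have ed := back_spec HL1 om ex0; rewrite -bkS in ed.
    split; first by case: ed.
    move=> k hk.
    have E2 := h1'.1 (p - j.+1).
    have e2 : (p - j.+1).+1 = p - j by lia.
    rewrite e2 in E2.
    apply: (edge_uniq_lvl HL1 ed E2); apply: ag; lia.
  have ex0 : forall j, j <= p -> exists e : E L1 0, tgt e = bk j 1 /\ lab e = (x1' (p - j)).1.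
    move=> j hj; case: (B j hj) => _ ag; rewrite ag; [exact: inX_lvl0|lia].
  pose x2 : XT L1 := fun i => if i < p then ((x1' i).1, bk (p - i)) else x i.
  have hx2 : inX x2.
    split.
      move=> i; rewrite /x2.
      case: (ltngtP i.+1 p) => hi.
        rewrite /=.
        have -> : p - i = (p - i.+1).+1 by lia.
        rewrite bkS; have -> : p - (p - i.+1) = i.+1 by lia.
        have := back_spec HL1 (B (p - i.+1) (leq_subr _ _)).1 (ex0 _ (leq_subr _ _)).
        by have -> : p - (p - i.+1) = i.+1 by lia.
      exact: hx.1.
      rewrite /= -hi subSnn bkS subn0 hi (lab_eq p); last by lia.
      rewrite (A1 p) //.
      have := back_spec HL1 (B 0 (leq0n _)).1 (ex0 0 (leq0n _)).
      by rewrite subn0.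
    rewrite /x2; case: (posnP p) => hp.
      exact: hx.2.
    rewrite /= subn0; exists (back (bk p) (x1' 0).1).
    have := back_spec HL1 (B p (leqnn _)).1 (ex0 p (leqnn _)).
    by rewrite subnn.
  have wx2 : word LL x2 = word LL x1'.
    apply: word_eq => i hi; rewrite /x2; case: ifP => // /negbT; rewrite -leqNgt => hip.
    by rewrite lab_eq // A1.
  have vx2 : vert LL LL x2 = vert LL LL x.
    by rewrite /vert /x2 ifF //; apply/negbTE; rewrite -leqNgt; lia.
  have shN : forall n X, inX X -> inX (fun i => X (i + n)) /\
      psi0 (fun i => X (i + n)) = (fun i => psi0 X (i + n)).
    elim=> [|n IH] X hX.
      have -> : (fun i => X (i + 0)) = X by apply: functional_extensionality => i; rewrite addn0.
      split=> //; apply: functional_extensionality => i; rewrite addn0 //.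
    have -> : (fun i => X (i + n.+1)) = shiftX (fun i => X (i + n)).
      by apply: functional_extensionality => i; rewrite /shiftX addSnnS.
    case: (IH X hX) => h1X h2X; split; first exact: inX_shift.
    rewrite Hshift // h2X; apply: functional_extensionality => i.
    by rewrite /shiftX addSnnS.
  have tail : forall i, p <= i -> psi0 x2 i = y i.
    move=> i hi.
    have eq2 : (fun i => x2 (i + p)) = (fun i => x (i + p)).
      apply: functional_extensionality => j; rewrite /x2 ifF //.
      by apply/negbTE; rewrite -leqNgt leq_addl.
    have := congr1 (fun f => f (i - p)) (congr1 psi0 eq2).
    rewrite (shN p x2 hx2).2 (shN p x hx).2 /= subnK // => ->.
    by rewrite ex.
  have px2 : psi0 x2 = y.
    apply: functional_extensionality => i.
    case: (leqP p i) => hi; first exact: tail.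
    apply: (det_back HL2 (psiX _ hx2) hy (p := p)) => //; last exact: ltnW.
      exact: tail.
    move=> j hj; apply: (word_nth (k := l)); last by lia.
    by rewrite Hb // wx2 -ex Hb // -w1 -(Hb x1 h1) e1 (Hb x1' h1').
  exists x2, m0; split=> //; split=> //.
  by rewrite vx2 wx2 w1'.
set xi := (fun p : XT L1 * nat => _).
have om0 : OmegaT L1 := fun k => proj1_sig (constructive_indefinite_description _ (omega_inh L1 k)).
case: (src_all (om0 0)) => e0 _.
have exG : forall t : XT L2 * nat, exists s : XT L1 * nat, inXN t -> inXN s /\ xi s = t.
  move=> [y m]; case: (classic (inX y)) => hy.
    case: (surj y m hy) => x [n [hx [ex eg]]]; exists (x, n) => _; split=> //.
    by rewrite /xi /= ex eg.
  by exists ((fun _ => (lab e0, om0)), 0) => /hy.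
pose G t := proj1_sig (constructive_indefinite_description _ (exG t)).
have HG : forall t, inXN t -> inXN (G t) /\ xi (G t) = t.
  by move=> t; exact: (proj2_sig (constructive_indefinite_description _ (exG t))).
exists G; split; [|split; [|split]].
- move=> [x n] hx; case: (HG (xi (x, n)) (psiX _ hx)).
  case: (G _) => x' n' hx' [ex' eg'].
  by case: (inj x' x n' n hx' hx ex' eg') => -> ->.
- exact: (fun t ht => (HG t ht).2).
- apply: (cont_bwd (@openXN_iff _ L1) (@openXN_iff _ L2) (RXN_equiv L1)).
    by move=> [x n] hx; exact: psiX.
  move=> [x n] hx N.
  case: (cont_fwd (@openX_iff _ L1) (@openX_iff _ L2) (agree_equiv L2) Hcont hx N) => M1 HM1.
  exists (maxn M1 LL.+1) => [[x' n']] hx' [ag en]; simpl in *.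
  case: (wv_agree (LL := LL) ag _) => [|ew ev]; first by lia.
  split; last by rewrite /xi /= ew ev en.
  apply: HM1 => //; apply: agree_mono ag; lia.
- apply: (cont_bwd (@openXN_iff _ L2) (@openXN_iff _ L1) (RXN_equiv L2)).
    by move=> t ht; case: (HG t ht).
  move=> [y m] hy N.
  have := HG (y, m) hy; case: (G (y, m)) => x n [hx [ex eg]]; simpl in *.
  case: (Hloc.2 x hx) => U [[hUX _] [Ux [[_ [O2 [HO2 HimO]]] [h [hK [hK' [_ ch]]]]]]].
  have imy : image_of psi0 U y by exists x.
  case: (cont_fwd (@openX_iff _ L2) (@openX_iff _ L1) (agree_equiv L1) ch imy (maxn N LL.+1)) => M1 HM1.
  have O2y : O2 y by apply/HimO.
  case: (HO2 _ O2y) => M2 HM2.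
  exists (maxn M1 M2) => [[y' m']] hy' [ag em]; simpl in *.
  have imy' : image_of psi0 U y' by apply/HimO => //; apply: HM2; apply: agree_mono ag; lia.
  have Ux2 : U (h y') := ch.1 _ imy'.
  have hx2 : inX (h y') := hUX _ Ux2.
  have px2 : psi0 (h y') = y' := hK' _ imy'.
  have ag2 : agree (maxn N LL.+1) x (h y').
    by rewrite -(hK x Ux) ex; apply: HM1 => //; apply: agree_mono ag; lia.
  case: (wv_agree (LL := LL) ag2 _) => [|ew ev]; first by lia.
  have := HG (y', m') hy'; case: (G (y', m')) => x' n' [hx' [ex' eg']]; simpl in *.
  have q1 : psi0 (h y') = psi0 x' by rewrite px2 ex'.
  have q2 : g (word LL (h y')) (vert LL LL (h y')) n = g (word LL x') (vert LL LL x') n'.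
    by rewrite -ew -ev eg' eg em.
  case: (inj (h y') x' n n' hx2 hx' q1 q2) => <- <-.
  split=> //; apply: agree_mono ag2; lia.
Qed.
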